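(* Let $n\ge3$. There exist vectors $a_1,\dots,a_n\in H_0$ with $a_1+\dots+a_n=0$ and $\mathrm{Span}\{a_i\}=H_0$ such that the polar dual (inside $H_0$) of $Root_n^a:=\mathrm{Conv}\{a_i-a_j:1\le i\ne j\le n\}$ is the polytope $$\Delta_{\mathcal F}=\sum_{i=1}^n[\hat e_i,\hat e_{i+1}]=\sum_{i=1}^n[0,\hat e_{i+1}-\hat e_i]\subset H_0,$$ where $\hat e_{n+1}:=\hat e_1$.
   Context: $H_0=\{x\in\mathbb{R}^n:\sum x_i=0\}$, $\hat e_i=e_i-\frac1n(e_1+\dots+e_n)$. Polar dual inside $H_0$: $K^\circ=\{y\in H_0:\langle y,x\rangle\le1\ \forall x\in K\}$. The polytope $\Delta_{\mathcal F}$ is the translate into $H_0$ of the Minkowski sum $\sum_{i=1}^n[e_i,e_{i+1}]$ associated to the hypergraph $\mathcal F=\{\{1,2\},\dots,\{n-1,n\},\{n,1\}\}$. *)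

(* Defs.v *)
From HB Require Import structures.
From mathcomp Require Import all_boot all_order all_algebra.
Set Implicit Arguments. Unset Strict Implicit. Unset Printing Implicit Defensive.
Import Order.TTheory GRing.Theory Num.Theory.
Local Open Scope ring_scope.

Section Defs.
Variables (R : realFieldType) (n : nat).

Definition dotv (x y : 'rV[R]_n) : R := \sum_(k < n) x 0 k * y 0 k.

Definition inH0 (x : 'rV[R]_n) : Prop := \sum_(k < n) x 0 k = 0.

Definition evec (i : 'I_n) : 'rV[R]_n := delta_mx 0 i.
Definition ehat (i : 'I_n) : 'rV[R]_n :=
  evec i - (n%:R)^-1 *: \sum_(j < n) evec j.

Definition in_span (a : 'I_n -> 'rV[R]_n) (x : 'rV[R]_n) : Prop :=
  exists c : 'I_n -> R, x = \sum_(i < n) c i *: a i.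

Definition in_conv (I : finType) (P : pred I) (p : I -> 'rV[R]_n) (x : 'rV[R]_n) : Prop :=
  exists l : I -> R, (forall k, P k -> 0 <= l k) /\ \sum_(k | P k) l k = 1 /\
    x = \sum_(k | P k) l k *: p k.

Definition polar_H0 (K : 'rV[R]_n -> Prop) (y : 'rV[R]_n) : Prop :=
  inH0 y /\ forall x, K x -> dotv y x <= 1.

Definition in_mink_seg (u v : 'I_n -> 'rV[R]_n) (y : 'rV[R]_n) : Prop :=
  exists t : 'I_n -> R, (forall i, 0 <= t i <= 1) /\
    y = \sum_(i < n) ((1 - t i) *: u i + t i *: v i).

Definition in_Root (a : 'I_n -> 'rV[R]_n) : 'rV[R]_n -> Prop :=
  in_conv (fun ij : 'I_n * 'I_n => ij.1 != ij.2) (fun ij => a ij.1 - a ij.2).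

End Defs.

(* Main.v *)
Require Import Defs.
From HB Require Import structures.
From mathcomp Require Import all_boot all_order all_algebra.
From mathcomp Require Import zify ring lra.
Set Implicit Arguments. Unset Strict Implicit. Unset Printing Implicit Defensive.
Import Order.TTheory GRing.Theory Num.Theory.
Local Open Scope ring_scope.

Lemma dotvD {R : realFieldType} {n} (y u v : 'rV[R]_n) : dotv y (u + v) = dotv y u + dotv y v.
Proof. by rewrite /dotv -big_split; apply: eq_bigr => k _; rewrite !mxE mulrDr. Qed.
Lemma dotvZ {R : realFieldType} {n} (y u : 'rV[R]_n) c : dotv y (c *: u) = c * dotv y u.
Proof. by rewrite /dotv mulr_sumr; apply: eq_bigr => k _; rewrite !mxE; ring. Qed.
Lemma dotvN {R : realFieldType} {n} (y u : 'rV[R]_n) : dotv y (- u) = - dotv y u.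
Proof. by rewrite -scaleN1r dotvZ mulN1r. Qed.
Lemma dotvB {R : realFieldType} {n} (y u v : 'rV[R]_n) : dotv y (u - v) = dotv y u - dotv y v.
Proof. by rewrite dotvD dotvN. Qed.
Lemma dotv_sum {R : realFieldType} {n} (I : finType) (P : pred I) (F : I -> 'rV[R]_n) y :
  dotv y (\sum_(i | P i) F i) = \sum_(i | P i) dotv y (F i).
Proof.
rewrite /dotv exchange_big; apply: eq_bigr => k _; rewrite summxE mulr_sumr //.
Qed.
Lemma ordpred0 n (i : 'I_n) : val i = 0%N -> val (ord_pred i) = n.-1.
Proof. move=> h; rewrite /= h add0n modn_small //; case: n i h => [[]|]//. Qed.
Lemma ordpredS n (i : 'I_n) m : val i = m.+1 -> val (ord_pred i) = m.
Proof. move=> h; have hi : (m.+1 < n)%N by rewrite -h ltn_ord.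
rewrite /= h addSn /= modnDr modn_small //; lia. Qed.

Definition Pp {R : realFieldType} {n} (v : 'rV[R]_n) : 'rV[R]_n :=
  \row_j (v 0 j - n%:R^-1 * \sum_l v 0 l).
Definition sv {R : realFieldType} {n} (i : 'I_n) : 'rV[R]_n := \row_k ((k <= i)%N%:R).
Definition av {R : realFieldType} {n} (i : 'I_n) : 'rV[R]_n :=
  Pp (sv i) - n%:R^-1 *: \sum_j Pp (sv j).
Definition Sf {R : realFieldType} {n} (y : 'rV[R]_n) (i : 'I_n) : R :=
  \sum_(k < n | (k <= i)%N) y 0 k.

Lemma nR_neq0 {R : realFieldType} n : (0 < n)%N -> (n%:R : R) != 0.
Proof. by move=> h; rewrite pnatr_eq0 -lt0n. Qed.

Lemma inH0_Pp {R : realFieldType} {n} (v : 'rV[R]_n) : (0 < n)%N -> inH0 (Pp v).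
Proof.
move=> h; rewrite /inH0; under eq_bigr do rewrite mxE.
rewrite sumrB sumr_const card_ord.
by rewrite -mulrnAl -mulr_natr mulVf ?nR_neq0 // mul1r subrr.
Qed.

Lemma inH0D {R : realFieldType} {n} (u v : 'rV[R]_n) : inH0 u -> inH0 v -> inH0 (u + v).
Proof. rewrite /inH0 => hu hv; under eq_bigr do rewrite mxE; by rewrite big_split /= hu hv addr0. Qed.
Lemma inH0Z {R : realFieldType} {n} (u : 'rV[R]_n) c : inH0 u -> inH0 (c *: u).
Proof. rewrite /inH0 => hu; under eq_bigr do rewrite mxE; by rewrite -mulr_sumr hu mulr0. Qed.
Lemma inH0N {R : realFieldType} {n} (u : 'rV[R]_n) : inH0 u -> inH0 (- u).
Proof. by move=> h; rewrite -scaleN1r; apply: inH0Z. Qed.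
Lemma inH00 {R : realFieldType} {n} : inH0 (0 : 'rV[R]_n).
Proof. by rewrite /inH0; apply: big1 => k _; rewrite mxE. Qed.
Lemma inH0_sum {R : realFieldType} {n} (I : finType) (P : pred I) (F : I -> 'rV[R]_n) :
  (forall i, P i -> inH0 (F i)) -> inH0 (\sum_(i | P i) F i).
Proof. move=> h; apply: big_ind => //; [exact: inH00 | exact: inH0D]. Qed.

Lemma inH0_av {R : realFieldType} {n} (i : 'I_n) : inH0 (av i : 'rV[R]_n).
Proof.
have h : (0 < n)%N by case: n i => [[]|].
by apply: inH0D; [apply: inH0_Pp|apply/inH0N/inH0Z/inH0_sum => j _; apply: inH0_Pp].
Qed.

Lemma sum_av {R : realFieldType} {n} : (0 < n)%N -> \sum_(i < n) (av i : 'rV[R]_n) = 0.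
Proof.
move=> h; rewrite /av sumrB sumr_const card_ord -scaler_nat scalerA.
rewrite mulfV ?nR_neq0 //.
by rewrite scale1r subrr.
Qed.

Lemma dot_Pp {R : realFieldType} {n} (y v : 'rV[R]_n) : inH0 y -> dotv y (Pp v) = dotv y v.
Proof.
move=> hy; rewrite /dotv; under eq_bigr do rewrite mxE mulrBr.
by rewrite sumrB -mulr_suml hy mul0r subr0.
Qed.

Lemma dot_sv {R : realFieldType} {n} (y : 'rV[R]_n) i : dotv y (sv i) = Sf y i.
Proof.
rewrite /dotv /Sf [RHS]big_mkcond /=; apply: eq_bigr => k _; rewrite mxE.
by case: (k <= i)%N; rewrite ?mulr1 ?mulr0.
Qed.

Lemma dot_av {R : realFieldType} {n} (y : 'rV[R]_n) i j : inH0 y ->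
  dotv y (av i - av j) = Sf y i - Sf y j.
Proof.
move=> hy; rewrite /av opprB addrA subrK dotvB !dot_Pp // !dot_sv //.
Qed.

Lemma Sf_0 {R : realFieldType} {n} (y : 'rV[R]_n) (i : 'I_n) : val i = 0%N -> Sf y i = y 0 i.
Proof.
move=> h; rewrite /Sf (big_pred1 i) // => k /=.
by rewrite h leqn0 -(inj_eq val_inj) /= h.
Qed.

Lemma Sf_S {R : realFieldType} {n} (y : 'rV[R]_n) (i : 'I_n) m : val i = m.+1 ->
  Sf y i = y 0 i + Sf y (ord_pred i).
Proof.
move=> h; rewrite /Sf (bigD1 i) //=; congr (_ + _); apply: eq_bigl => k.
have e := ordpredS h; rewrite /= in e; rewrite e -(inj_eq val_inj) /= h; lia.
Qed.

Lemma Sf_last {R : realFieldType} {n} (y : 'rV[R]_n) (i : 'I_n) : val i = n.-1 ->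
  Sf y i = \sum_k y 0 k.
Proof. move=> h; rewrite /Sf; apply: eq_bigl => k; have := ltn_ord k; rewrite h; lia. Qed.

Lemma diffS_gen {R : realFieldType} {n} (y : 'rV[R]_n) (k : 'I_n) :
  Sf y k - Sf y (ord_pred k) = y 0 k - (val k == 0%N)%:R * \sum_l y 0 l.
Proof.
case h: (val k) => [|m].
  by rewrite Sf_0 // Sf_last ?(ordpred0 h) // mul1r.
by rewrite (Sf_S y h) mul0r subr0 addrK.
Qed.

Lemma diffS {R : realFieldType} {n} (y : 'rV[R]_n) (k : 'I_n) : inH0 y ->
  Sf y k - Sf y (ord_pred k) = y 0 k.
Proof. by move=> hy; rewrite diffS_gen hy mulr0 subr0. Qed.

Lemma tele {R : realFieldType} {n} (y : 'rV[R]_n) (t : 'I_n -> R) (L : 'I_n) :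
  val L = n.-1 -> (forall k, y 0 k = t (ord_pred k) - t k) ->
  forall i, Sf y i = t L - t i.
Proof.
move=> hL hy i; move Hm: (val i) => m; elim: m i Hm => [|m IH] i h.
  rewrite Sf_0 // hy; congr (t _ - _); apply: val_inj; rewrite (ordpred0 h) hL //.
rewrite (Sf_S y h) (IH _ (ordpredS h)) hy; lra.
Qed.

Lemma sum_evec_entry {R : realFieldType} {n} (k : 'I_n) :
  (\sum_(j < n) (evec R j)) 0 k = 1.
Proof.
rewrite summxE (bigD1 k) //= big1 ?addr0 => [|j hj]; rewrite /evec mxE ?eqxx //=.
by rewrite eq_sym (negbTE hj).
Qed.

Lemma ehatE {R : realFieldType} {n} (i k : 'I_n) : (ehat R i) 0 k = (k == i)%:R - n%:R^-1.
Proof. by rewrite /ehat !mxE sum_evec_entry mulr1 eqxx. Qed.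

Lemma sum_ehat {R : realFieldType} {n} : (0 < n)%N -> \sum_(i < n) (ehat R i) = 0.
Proof.
move=> h; rewrite /ehat sumrB sumr_const card_ord -scaler_nat scalerA mulfV ?nR_neq0 //.
by rewrite scale1r subrr.
Qed.

Lemma sum_ind {R : realFieldType} {n} (k : 'I_n) (F : 'I_n -> R) :
  \sum_i F i * (k == i)%:R = F k.
Proof.
rewrite (bigD1 k) //= eqxx mulr1 big1 ?addr0 // => j hj.
by rewrite eq_sym (negbTE hj) mulr0.
Qed.

Lemma sum_indS {R : realFieldType} {n} (k : 'I_n) (F : 'I_n -> R) :
  \sum_i F i * (k == ordS i)%:R = F (ord_pred k).
Proof.
rewrite (bigD1 (ord_pred k)) //= ord_predK eqxx mulr1 big1 ?addr0 // => j hj.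
case: eqP => [e|]; last by rewrite mulr0.
by move: hj; rewrite e ordSK eqxx.
Qed.

Lemma mink_entry {R : realFieldType} {n} (t : 'I_n -> R) (k : 'I_n) :
  (\sum_(i < n) ((1 - t i) *: (ehat R i) + t i *: ehat R (ordS i))) 0 k
  = t (ord_pred k) - t k.
Proof.
rewrite summxE.
rewrite (eq_bigr (fun i => (1 - t i) * ehat R i 0 k + t i * ehat R (ordS i) 0 k)); last by move=> i _; rewrite !mxE.
under eq_bigr do rewrite !ehatE.
rewrite (eq_bigr (fun i => 1 * (k == i)%:R - n%:R^-1 + (t i * (k == ordS i)%:R - t i * (k == i)%:R))); last by move=> i _; ring.
rewrite big_split /= sumrB sum_ind sumr_const card_ord sumrB sum_ind sum_indS.
have hn : (0 < n)%N by case: n k t => [[]|].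
have -> : (n%:R^-1 *+ n : R) = 1 by rewrite -[LHS]mulr_natr mulVf ?nR_neq0.
by rewrite subrr add0r.
Qed.

Lemma sum_sv {R : realFieldType} {n} (i : 'I_n) :
  \sum_l (sv i : 'rV[R]_n) 0 l = Sf (const_mx 1) i.
Proof.
rewrite /Sf [RHS]big_mkcond /=; apply: eq_bigr => l _; rewrite !mxE.
by case: (l <= i)%N.
Qed.

Lemma sv_diff {R : realFieldType} {n} (k j : 'I_n) :
  ((j <= k)%N%:R - (j <= ord_pred k)%N%:R : R) = (j == k)%:R - (nat_of_ord k == 0%N)%:R.
Proof.
have hj := ltn_ord j.
have ej : (j == k) = (nat_of_ord j == nat_of_ord k) by [].
case h: (nat_of_ord k) => [|m].
  have e : nat_of_ord (ord_pred k) = n.-1 := ordpred0 h.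
  rewrite e ej h.
  have -> : (j <= n.-1)%N = true by lia.
  by rewrite leqn0.
have e : nat_of_ord (ord_pred k) = m := ordpredS h.
rewrite e ej h /=.
case: (eqVneq (nat_of_ord j) m.+1) => [->|hjk].
  have -> : (m.+1 <= m)%N = false by lia.
  by rewrite ltnSn subr0.
have hjk' : nat_of_ord j <> m.+1 by apply/eqP.
have -> : (j <= m.+1)%N = (j <= m)%N by lia.
by rewrite subrr subr0.
Qed.

Lemma ehat_av {R : realFieldType} {n} (k : 'I_n) :
  ehat R k = av k - av (ord_pred k).
Proof.
have hn : (0 < n)%N by case: n k => [[]|].
apply/rowP => j; rewrite ehatE /av opprB addrA subrK.
have E (u v : 'rV[R]_n) : (Pp u - Pp v) 0 j =
   (u 0 j - v 0 j) - n%:R^-1 * (\sum_l u 0 l - \sum_l v 0 l) by rewrite !mxE; ring.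
rewrite E !sum_sv diffS_gen !mxE sv_diff.
rewrite (eq_bigr (fun _ => 1)); last by move=> l _; rewrite mxE.
rewrite sumr_const card_ord.
have hV : n%:R^-1 * n%:R = 1 :> R by rewrite mulVf ?nR_neq0.
case: (nat_of_ord k == 0%N).
  rewrite mul1r mulrBr hV mulr1.
  rewrite /=; ring.
rewrite /= mul0r subr0.
by rewrite subr0 mulr1.
Qed.

Lemma H0_span {R : realFieldType} {n} (x : 'rV[R]_n) : (0 < n)%N -> inH0 x -> in_span av x.
Proof.
move=> hn hx.
have -> : x = \sum_k x 0 k *: ehat R k.
  apply/rowP => j; rewrite summxE.
  under eq_bigr do rewrite mxE ehatE mulrBr.
  by rewrite sumrB sum_ind -mulr_suml hx mul0r subr0.
exists (fun k => x 0 k - x 0 (ordS k)).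
under eq_bigr do rewrite ehat_av scalerBr.
under [RHS]eq_bigr do rewrite scalerBl.
rewrite !sumrB; congr (_ - _).
by rewrite (reindex_inj (@ordS_inj n)) /=; apply: eq_bigr => k _; rewrite ordSK.
Qed.

Lemma mink_H0 {R : realFieldType} {n} (t : 'I_n -> R) :
  inH0 (\sum_(i < n) ((1 - t i) *: (ehat R i) + t i *: ehat R (ordS i))).
Proof.
rewrite /inH0; under eq_bigr do rewrite mink_entry.
rewrite sumrB [X in X - _](reindex_inj (@ordS_inj n)) /=.
by under eq_bigr do rewrite ordSK; rewrite subrr.
Qed.

Lemma mink_eq {R : realFieldType} {n} (t : 'I_n -> R) : (0 < n)%N ->
  \sum_(i < n) ((1 - t i) *: (ehat R i) + t i *: ehat R (ordS i)) =
  \sum_(i < n) ((1 - t i) *: (0 : 'rV[R]_n) + t i *: (ehat R (ordS i) - ehat R i)).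
Proof.
move=> hn.
rewrite (eq_bigr (fun i => ehat R i + t i *: (ehat R (ordS i) - ehat R i))); last first.
  by move=> i _; apply/rowP => k; rewrite !mxE; ring.
rewrite big_split /= sum_ehat // add0r; apply: eq_bigr => i _.
by rewrite scaler0 add0r.
Qed.
Unset Implicit Arguments.

Theorem mainTheorem11 (R : realFieldType) (n : nat) (hn : (3 <= n)%N) :
  exists a : 'I_n -> 'rV[R]_n,
    (forall i, inH0 (a i)) /\
    \sum_(i < n) a i = 0 /\
    (forall x, inH0 x <-> in_span a x) /\
    (forall y, polar_H0 (in_Root a) y <->
               in_mink_seg (fun i => @ehat R n i) (fun i => @ehat R n (ordS i)) y) /\
    (forall y, in_mink_seg (fun i => @ehat R n i) (fun i => @ehat R n (ordS i)) y <->
               in_mink_seg (fun _ => 0) (fun i => @ehat R n (ordS i) - @ehat R n i) y).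
Proof.
have hn0 : (0 < n)%N by lia.
have hL : (n.-1 < n)%N by lia.
pose L : 'I_n := Ordinal hL.
pose i0 : 'I_n := Ordinal hn0.
exists av.
split; first exact: inH0_av.
split; first exact: sum_av.
split.
  move=> x; split; first exact: H0_span.
  by case=> c ->; apply: inH0_sum => i _; apply/inH0Z/inH0_av.
split; last first.
  move=> y; split => -[t [ht ->]]; exists t; split => //.
    by rewrite mink_eq.
  by rewrite -mink_eq.
move=> y; split.
- case=> hy hK.
  have hS : forall i j, Sf y i - Sf y j <= 1.
    move=> i j; case: (eqVneq i j) => [->|hij]; first by rewrite subrr ler01.
    rewrite -dot_av //; apply: hK.
    exists (fun ij => ((ij == (i, j)) : bool)%:R); split; first by move=> k _; rewrite ler0n.
    split.
      rewrite (bigD1 (i,j)) //= eqxx big1 ?addr0 // => k /andP [_ hk].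
      by rewrite (negbTE hk).
    rewrite (bigD1 (i,j)) //= eqxx scale1r big1 ?addr0 // => k /andP [_ hk].
    by rewrite (negbTE hk) scale0r.
  pose M := \big[Num.max/Sf y i0]_i Sf y i.
  exists (fun i => M - Sf y i); split.
    move=> i; rewrite subr_ge0 le_bigmax /= lerBlDr.
    by apply: bigmax_le => [|j _]; rewrite -lerBlDr; apply: hS.
  apply/rowP => k; rewrite mink_entry -(diffS k hy); ring.
- case=> t [ht ->]; split; first exact: mink_H0.
  set z := \sum_(i < n) _.
  have hy : forall k, z 0 k = t (ord_pred k) - t k by move=> k; rewrite /z mink_entry.
  have hT := tele (erefl _ : val L = n.-1) hy.
  move=> x [l [hl [hl1 ->]]].
  rewrite dotv_sum -[X in _ <= X]hl1; apply: ler_sum => k hk.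
  rewrite dotvZ (dot_av _ _ (mink_H0 t)) !hT -[X in _ <= X]mulr1.
  apply: ler_wpM2l; first exact: hl.
  case/andP: (ht k.1) => h1 h2; case/andP: (ht k.2) => h3 h4; lra.
Qed.
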